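(* Let $n\ge1$, let $b_1,\dots,b_n$ be integers with $1\le b_1\le b_2\le\cdots\le b_n$, let $s=\sum_{i=1}^n b_i$, and let $f:\mathbb R^n\to\mathbb R$, $f(\bm\theta)=\prod_{i=1}^n\theta_i^{b_i}$. Let $N$ be the minimum atom count of a DC decomposition of $f$ (defined in the context). Then: (a) if $s$ is even and the atoms are of the form $(u^\top\bm\theta)^s$, then $\prod_{i=2}^n(b_i+1)\le N\le\left\lfloor\tfrac12\prod_{i=1}^n(b_i+1)\right\rfloor$; (b) if $s$ is odd and the atoms are of the form $(u^\top\bm\theta+\kappa)^{s+1}$, then $N=\prod_{i=1}^n(b_i+1)$.
   Context: A DC decomposition of $f$ with atoms is an identity, valid for all $\bm\theta\in\mathbb R^n$, $f(\bm\theta)=g(\bm\theta)-h(\bm\theta)$ with $g(\bm\theta)=\sum_{i=1}^r\alpha_i\phi_i(\bm\theta)$ and $h(\bm\theta)=\sum_{i=r+1}^{r+q}\alpha_i\phi_i(\bm\theta)$, where every $\alpha_i>0$ and each $\phi_i$ is a convex atom: $\phi_i(\bm\theta)=(u_i^\top\bm\theta)^s$ with $u_i\in\mathbb R^n$ when $s$ is even, and $\phi_i(\bm\theta)=(u_i^\top\bm\theta+\kappa_i)^{s+1}$ with $u_i\in\mathbb R^n$, $\kappa_i\in\mathbb R$ when $s$ is odd. The minimum atom count $N$ is the minimum of $r+q$ over all such decompositions. *)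

(* Defs.v *)
From mathcomp Require Import all_boot all_order all_algebra.
From mathcomp Require Import reals.
Set Implicit Arguments. Unset Strict Implicit. Unset Printing Implicit Defensive.
Import Order.TTheory GRing.Theory Num.Theory.
Local Open Scope ring_scope.

Definition dotp (R : realType) (n : nat) (u th : 'I_n -> R) : R :=
  \sum_(j < n) u j * th j.

Definition atom (R : realType) (n s : nat) (u : 'I_n -> R) (kappa : R)
    (th : 'I_n -> R) : R :=
  if ~~ odd s then (dotp u th) ^+ s else (dotp u th + kappa) ^+ s.+1.

Definition DC_atoms (R : realType) (n s : nat) (f : ('I_n -> R) -> R)
    (N : nat) : Prop :=
  exists (r q : nat)
    (a : 'I_r -> R) (ug : 'I_r -> 'I_n -> R) (kg : 'I_r -> R)
    (c : 'I_q -> R) (uh : 'I_q -> 'I_n -> R) (kh : 'I_q -> R),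
    [/\ (r + q)%N = N,
        (forall i, 0 < a i),
        (forall i, 0 < c i) &
        forall th : 'I_n -> R,
          f th = \sum_(i < r) a i * atom s (ug i) (kg i) th
               - \sum_(i < q) c i * atom s (uh i) (kh i) th].

Definition min_atom_count (R : realType) (n s : nat) (f : ('I_n -> R) -> R)
    (N : nat) : Prop :=
  DC_atoms s f N /\ forall k, DC_atoms s f k -> (N <= k)%N.

(* Main.v *)
Require Import Defs.
From mathcomp Require Import all_boot all_order all_algebra.
From mathcomp Require Import reals.
From mathcomp Require Import ring lra zify.
From Stdlib Require Import Classical.
Import Order.TTheory GRing.Theory Num.Theory.
Local Open Scope ring_scope.

Module Aux.
Set Implicit Arguments. Unset Strict Implicit. Unset Printing Implicit Defensive.

Definition cnt M D (w : {ffun 'I_D -> 'I_M}) (j : 'I_M) : nat := #|[pred t | w t == j]|.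

Lemma prod_fiber (R : comPzRingType) M D (w : {ffun 'I_D -> 'I_M}) (y : 'I_M -> R) :
  \prod_(t < D) y (w t) = \prod_(j < M) y j ^+ cnt w j.
Proof.
rewrite (partition_big w predT) //=; apply: eq_bigr => j _.
rewrite -prodr_const; apply: eq_big => [t|t /eqP <-] //.
Qed.

Lemma cnt_sum M D (w : {ffun 'I_D -> 'I_M}) : (\sum_j cnt w j)%N = D.
Proof.
transitivity (\sum_(t < D) 1)%N; last by rewrite sum1_card card_ord.
rewrite (partition_big w predT) //=; apply: eq_bigr => j _.
by rewrite sum1_card; apply: eq_card => t.
Qed.

Lemma cnt_le M D (w : {ffun 'I_D -> 'I_M}) j : (cnt w j <= D)%N.
Proof. by rewrite -{2}(card_ord D) max_card. Qed.

Lemma expand_pow (R : comPzRingType) M D (a : 'I_M -> R) :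
  (\sum_j a j) ^+ D = \sum_(w : {ffun 'I_D -> 'I_M}) \prod_t a (w t).
Proof.
rewrite -{1}(card_ord D) -prodr_const; exact: bigA_distr_bigA.
Qed.

Lemma dual_weights (R : fieldType) K (t : 'I_K -> R) : injective t ->
  forall c : 'I_K, {v : 'I_K -> R |
    forall e : 'I_K, \sum_l v l * t l ^+ e = (e == c)%:R}.
Proof.
move=> tinj c.
pose V := Vandermonde K (\row_l t l).
have Vu : V \in unitmx.
  rewrite unitmxE det_Vandermonde unitfE; apply/prodf_neq0 => i _.
  apply/prodf_neq0 => j ij; rewrite !mxE subr_eq0; apply/eqP => /tinj E.
  by move: ij; rewrite E ltnn.
pose w := invmx V *m delta_mx c (ord0 : 'I_1).
exists (fun l => w l ord0) => e.
have := congr1 (fun M : 'M[R]_(K,1) => M e ord0) (mulKVmx Vu (delta_mx c (ord0 : 'I_1))).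
rewrite !mxE /= andbT => <-; apply: eq_bigr => l _; rewrite !mxE mulrC.
by [].
Qed.

Lemma prod_bool (R : comPzSemiRingType) (I : finType) (P : pred I) :
  \prod_(i : I) ((P i)%:R : R) = ([forall i, P i])%:R.
Proof.
case: (boolP [forall i, P i]) => [/forallP H|/forallPn [i /negbTE Hi]]; first by rewrite big1 // => i _; rewrite H.
by rewrite (bigD1 i) //= Hi mul0r.
Qed.

Lemma pow_expand2 (R : comPzRingType) M D (a x : 'I_M -> R) :
  (\sum_j a j * x j) ^+ D =
  \sum_(w : {ffun 'I_D -> 'I_M}) (\prod_j a j ^+ cnt w j) * \prod_j x j ^+ cnt w j.
Proof.
rewrite expand_pow; apply: eq_bigr => w _.
by rewrite big_split /= !prod_fiber.
Qed.

Section Moments.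
Variables (R : numFieldType) (M D K : nat) (lam : 'I_K -> R) (p : 'I_K -> 'I_M -> R)
  (beta : 'I_M -> nat).
Hypothesis sumbeta : (\sum_j beta j)%N = D.
Hypothesis ident : forall x : 'I_M -> R, (forall j, x j != 0) ->
  \sum_k lam k * (\sum_j p k j * x j) ^+ D = \prod_j x j ^+ beta j.

Definition words (g : 'I_M -> nat) :=
  #|[pred w : {ffun 'I_D -> 'I_M} | [forall j, cnt w j == g j]]|.

Lemma moments (g : 'I_M -> nat) : (forall j, g j <= D)%N ->
  (words g)%:R * (\sum_k lam k * \prod_j p k j ^+ g j)
  = ([forall j, g j == beta j])%:R.
Proof.
move=> gD.
pose t (l : 'I_D.+1) : R := (l.+1)%:R.
have tinj : injective t by move=> l1 l2 /eqP; rewrite /t eqr_nat => /eqP [] /val_inj.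
have tnz l : t l != 0 by rewrite /t pnatr_eq0.
have dw := dual_weights tinj.
pose v (c : 'I_D.+1) := sval (dw c).
have vP c (e : 'I_D.+1) : \sum_l v c l * t l ^+ e = (e == c)%:R := svalP (dw c) e.
pose W (X : {ffun 'I_M -> 'I_D.+1}) := \prod_j v (inord (g j)) (X j).
have Lam (a : 'I_M -> nat) : (forall j, a j <= D)%N ->
   \sum_X W X * \prod_j t (X j) ^+ a j = ([forall j, a j == g j])%:R.
  move=> aD; rewrite -prod_bool.
  transitivity (\prod_j \sum_l v (inord (g j)) l * t l ^+ a j).
    rewrite bigA_distr_bigA; apply: eq_bigr => X _; rewrite -big_split //=.
  apply: eq_bigr => j _.
  have E : (inord (a j) == inord (g j) :> 'I_D.+1) = (a j == g j).
    by rewrite -(inj_eq val_inj) /= !inordK ?ltnS.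
  rewrite -E -vP; apply: eq_bigr => l _; rewrite inordK ?ltnS //.
have bD j : (beta j <= D)%N by rewrite -sumbeta (bigD1 j) //= leq_addr.
have E1 : \sum_X W X * (\sum_k lam k * (\sum_j p k j * t (X j)) ^+ D)
          = ([forall j, g j == beta j])%:R.
  rewrite (eq_bigr (fun X => W X * \prod_j t (X j) ^+ beta j)); last first.
    by move=> X _; rewrite ident.
  rewrite Lam //; congr (nat_of_bool _ )%:R; apply: eq_forallb => j; by rewrite eq_sym.
rewrite -E1; symmetry.
under eq_bigr do rewrite big_distrr /=.
rewrite exchange_big /= big_distrr /=; apply: eq_bigr => k _.
under eq_bigr do rewrite mulrCA pow_expand2 big_distrr /=.
rewrite -big_distrr /= exchange_big /= [RHS]mulrCA; congr (lam k * _).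
rewrite /words -sum1_card natr_sum big_distrl /= [RHS]big_mkcond /=.
apply: eq_bigr => w _.
rewrite (eq_bigr (fun X => (\prod_j p k j ^+ cnt w j) * (W X * \prod_j t (X j) ^+ cnt w j))); last first.
  by move=> X _; rewrite mulrCA.
rewrite -big_distrr /= Lam; last by move=> j; exact: cnt_le.
rewrite inE; case: (boolP [forall j, cnt w j == g j]) => [/forallP H|_]; last by rewrite mulr0.
rewrite mul1r mulr1; apply: eq_bigr => j _; by rewrite (eqP (H j)).
Qed.
End Moments.

Lemma card_nth (T : Type) (x0 : T) (s : seq T) n (P : pred T) : size s = n ->
  #|[pred t : 'I_n | P (nth x0 s t)]| = count P s.
Proof.
move=> <-; rewrite -sum1_card -sum1_count.
rewrite -[in RHS](mkseq_nth x0 s) /mkseq big_map.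
rewrite -(subn0 (size s)) -/(index_iota 0 (size s)) big_mkord subn0.
by apply: eq_bigl.
Qed.

Lemma words_pos M D (g : 'I_M -> nat) : (\sum_j g j)%N = D ->
  (0 < #|[pred w : {ffun 'I_D -> 'I_M} | [forall j, cnt w j == g j]]|)%N.
Proof.
case: M g => [|M] g.
  rewrite big_ord0 => <-; apply/card_gt0P; exists [ffun t => t].
  by rewrite inE; apply/forallP => -[].
move=> sg.
pose s := flatten [seq nseq (g j) j | j <- enum 'I_M.+1].
have ss : size s = D.
  rewrite -sg size_flatten /shape -map_comp sumnE big_map big_enum /=.
  by apply: eq_bigr => j _; rewrite /= size_nseq.
apply/card_gt0P; exists [ffun t : 'I_D => nth ord0 s t].
rewrite inE; apply/forallP => j; rewrite /cnt.
rewrite (eq_card (B := [pred t : 'I_D | pred1 j (nth ord0 s t)])); last first.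
  by move=> t; rewrite !inE ffunE.
rewrite card_nth // count_flatten -map_comp sumnE big_map big_enum /=.
rewrite (bigD1 j) //= count_nseq /= eqxx mul1n big1 ?addn0 //.
by move=> i /negbTE ij; rewrite count_nseq /= ij.
Qed.

Lemma field_aux (R : fieldType) (a b c d e x : R) : x != 0 ->
  a * (b * c * (d * e)) = b * d / x * (a * (x * c * e)).
Proof. by move=> x0; field. Qed.

Section Lower.
Variables (R : fieldType) (m K : nat) (lam : 'I_K -> R) (p : 'I_K -> 'I_m.+1 -> R)
  (beta : 'I_m.+1 -> nat).
Hypothesis beta0 : (1 <= beta ord0)%N.
Hypothesis mom0 : forall g : 'I_m.+1 -> nat,
  (\sum_j g j = \sum_j beta j)%N -> ~~ [forall j, g j == beta j] ->
  \sum_k lam k * \prod_j p k j ^+ g j = 0.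
Hypothesis mom1 : \sum_k lam k * \prod_j p k j ^+ beta j != 0.

Let beta' (i : 'I_m) := beta (lift ord0 i).
Let T := {dffun forall i : 'I_m, 'I_(beta' i).+1}.

Lemma card_T : #|{: T}| = (\prod_(i < m) (beta' i).+1)%N.
Proof.
rewrite card_dep_ffun foldrE big_map big_enum /=.
by apply: eq_bigr => i _; rewrite card_ord.
Qed.

Lemma lower_bound : (\prod_(i < m) (beta (lift ord0 i)).+1 <= K)%N.
Proof.
rewrite -/(beta' _) -card_T leqNgt; apply/negP => KT.
pose N := #|{: T}|.
pose e (i : 'I_N) (j : 'I_m) : nat := enum_val i j.
have eb i j : (e i j <= beta' j)%N by rewrite /e -ltnS ltn_ord.
pose sz (i : 'I_N) := (\sum_j e i j)%N.
pose S' := (\sum_j beta' j)%N.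
pose A : 'M[R]_(N, K) := \matrix_(i, k) (p k ord0 ^+ (S' - sz i) *
     \prod_j p k (lift ord0 j) ^+ e i j).
have : kermx A != 0.
  rewrite kermx_eq0 /row_free; apply/negP => /eqP rA.
  by have := rank_leq_col A; rewrite rA leqNgt KT.
case/matrix0Pn => i0 [j0 kz].
pose c (i : 'I_N) := kermx A i0 i.
have ker k : \sum_i c i * A i k = 0.
  have := congr1 (fun M : 'M[R]_(N, K) => M i0 k) (mulmx_ker A).
  by rewrite !mxE.
have cz : c j0 != 0 by [].
case: (@arg_maxnP _ j0 (fun i => c i != 0) sz cz) => istar cstar maxst.
pose ms := sz istar.
have msS : (ms <= S')%N by apply: leq_sum => j _; exact: eb.
pose gam (i : 'I_N) (j : 'I_m.+1) : nat :=
  if unlift ord0 j is Some j' then (beta' j' - e istar j' + e i j')%N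
  else (beta ord0 + ms - sz i)%N.
have gsplit (q : 'I_m.+1 -> R) i : \prod_j q j ^+ gam i j =
    q ord0 ^+ (beta ord0 + ms - sz i) *
    \prod_j q (lift ord0 j) ^+ (beta' j - e istar j + e i j)%N.
  rewrite big_ord_recl /gam unlift_none; congr (_ * _).
  by apply: eq_bigr => j _; rewrite liftK.
have sumbeta : (\sum_j beta j = beta ord0 + S')%N by rewrite big_ord_recl.
have claimB i : c i != 0 -> (\sum_j gam i j = \sum_j beta j)%N /\
    [forall j, gam i j == beta j] = (i == istar).
  move=> ci; have szi := maxst i ci; split.
    rewrite sumbeta big_ord_recl /gam unlift_none.
    under eq_bigr do rewrite liftK.
    rewrite big_split /= sumnB; last by move=> j _; exact: eb.
    have : (sz i <= ms)%N := szi.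
    have -> : (\sum_(i1 < m) e istar i1)%N = ms by [].
    have -> : (\sum_(i1 < m) beta' i1)%N = S' by [].
    have -> : (\sum_(i1 < m) e i i1)%N = sz i by [].
    move: msS; clearbody ms S' sz; lia.
  apply/forallP/eqP => [H|->]; last first.
    move=> j; rewrite /gam; case: (unliftP ord0 j) => [j'|] -> /=.
      by rewrite subnK ?eb.
    by rewrite addnK.
  apply: enum_val_inj; apply/ffunP => j; apply: val_inj.
  have := H (lift ord0 j); rewrite /gam liftK -/(beta' j) => /eqP.
  have := eb istar j; rewrite /e; move=> h1 h2; have : e i j = e istar j by rewrite /e; lia.
  by [].
have claimA k : \sum_i c i * \prod_j p k j ^+ gam i j = 0.
  case: (eqVneq (p k ord0) 0) => p0.
    apply: big1 => i _; case: (eqVneq (c i) 0) => [->|ci]; first by rewrite mul0r.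
    have : (sz i <= ms)%N := maxst i ci.
    rewrite gsplit p0 expr0n => szi.
    have -> : (beta ord0 + ms - sz i == 0)%N = false.
      by apply/negbTE; move: beta0 szi; clearbody ms sz; lia.
    by rewrite mul0r mulr0.
  pose P' := \prod_j p k (lift ord0 j) ^+ (beta' j - e istar j).
  have E i : c i * \prod_j p k j ^+ gam i j =
      (p k ord0 ^+ beta ord0 * P' / p k ord0 ^+ (S' - ms)) * (c i * A i k).
    case: (eqVneq (c i) 0) => [->|ci]; first by rewrite !mul0r mulr0.
    have szi : (sz i <= ms)%N := maxst i ci.
    rewrite gsplit mxE.
    have -> : (S' - sz i = (S' - ms) + (ms - sz i))%N.
      by move: msS szi; clearbody ms sz S'; lia.
    have -> : (beta ord0 + ms - sz i = beta ord0 + (ms - sz i))%N.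
      by move: msS szi; clearbody ms sz S'; lia.
    under eq_bigr do rewrite exprD.
    rewrite big_split /= -/P' !exprD.
    have nz : p k ord0 ^+ (S' - ms) != 0 by apply: expf_neq0.
    exact: field_aux.
  by rewrite (eq_bigr _ (fun i _ => E i)) -big_distrr /= ker mulr0.
have : \sum_k lam k * \sum_i c i * \prod_j p k j ^+ gam i j = 0.
  by apply: big1 => k _; rewrite claimA mulr0.
under eq_bigr do rewrite big_distrr /=.
rewrite exchange_big /= (bigD1 istar) //= [X in _ + X]big1 => [|i ii]; last first.
  case: (eqVneq (c i) 0) => [ci|ci].
    by apply: big1 => k _; rewrite ci mul0r mulr0.
  have [gs gb] := claimB i ci.
  under eq_bigr do rewrite mulrCA.
  by rewrite -big_distrr /= mom0 ?mulr0 // gb.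
have [_ gb] := claimB istar cstar.
have /forallP gbeta : [forall j, gam istar j == beta j] by rewrite gb.
rewrite addr0.
under eq_bigr do rewrite mulrCA.
rewrite -big_distrr /=.
under eq_bigr do (under eq_bigr do rewrite (eqP (gbeta _))).
by move/eqP; rewrite mulf_eq0 (negbTE cstar) (negbTE mom1).
Qed.
End Lower.

Section Grid.
Variables (R : numFieldType) (M : nat) (beta : 'I_M -> nat).
Let D := (\sum_j beta j)%N.

Lemma betaD j : (beta j <= D)%N.
Proof. by rewrite /D (bigD1 j) //= leq_addr. Qed.

Definition node j (l : nat) : R := 2 * l%:R - (beta j)%:R.

Lemma node_inj j : injective (fun l : 'I_(beta j).+1 => node j l).
Proof.
move=> l1 l2 /eqP; rewrite /node (inj_eq (addIr _)) (inj_eq (mulrI _)) ?eqr_nat.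
  by move/eqP/val_inj.
by rewrite unitfE pnatr_eq0.
Qed.

Definition vj j : 'I_(beta j).+1 -> R :=
  sval (dual_weights (@node_inj j) ord_max).
Arguments vj : clear implicits.

Lemma vjP j (e : 'I_(beta j).+1) :
  \sum_l vj j l * node j l ^+ e = (e == ord_max)%:R.
Proof. exact: (svalP (dual_weights (@node_inj j) ord_max)). Qed.

Definition vw j (l : 'I_D.+1) : R :=
  if (l <= beta j)%N then vj j (inord l : 'I_(beta j).+1) else 0.

Lemma vwP j (e : nat) : (e <= beta j)%N ->
  \sum_l vw j l * node j l ^+ e = (e == beta j)%:R.
Proof.
move=> eb.
have := vjP (inord e : 'I_(beta j).+1).
rewrite -(inj_eq val_inj) /= inordK ?ltnS // => <-.
rewrite [RHS](eq_bigr (fun l : 'I_(beta j).+1 => vj j (inord l : 'I_(beta j).+1) * node j l ^+ e)); last first.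
  by move=> l _; rewrite inord_val.
rewrite [RHS](big_ord_widen_cond D.+1 (fun _ => true)
   (fun l => vj j (inord l : 'I_(beta j).+1) * node j l ^+ e)); last by rewrite ltnS betaD.
rewrite big_mkcond [RHS]big_mkcond /=; apply: eq_bigr => l _.
by rewrite /vw ltnS; case: ifP => // _; rewrite mul0r.
Qed.

Lemma ex_lt (a : 'I_M -> nat) : (\sum_j a j = D)%N -> ~~ [forall j, a j == beta j] ->
  exists j, (a j < beta j)%N.
Proof.
move=> sa nf; apply/existsP; apply: contraR nf => /existsPn H.
have ge j : (beta j <= a j)%N by rewrite leqNgt H.
have : (\sum_j (a j - beta j) == 0)%N by rewrite sumnB // sa subnn.
rewrite sum_nat_eq0 => /forallP H2; apply/forallP => j.
by rewrite eqn_leq ge andbT -subn_eq0; exact: H2.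
Qed.

Definition gridpt (X : {ffun 'I_M -> 'I_D.+1}) (j : 'I_M) : R := node j (X j).
Definition gridw (X : {ffun 'I_M -> 'I_D.+1}) := \prod_j vw j (X j).

Lemma grid_identity (x : 'I_M -> R) :
  \sum_X gridw X * (\sum_j gridpt X j * x j) ^+ D
  = (words D beta)%:R * \prod_j x j ^+ beta j.
Proof.
transitivity (\sum_(X : {ffun 'I_M -> 'I_D.+1}) \sum_(w : {ffun 'I_D -> 'I_M})
   gridw X * ((\prod_j gridpt X j ^+ cnt w j) * \prod_j x j ^+ cnt w j)).
  by apply: eq_bigr => X _; rewrite pow_expand2 big_distrr.
rewrite exchange_big /= /words -sum1_card natr_sum big_distrl /= [RHS]big_mkcond /=.
apply: eq_bigr => w _.
under eq_bigr do rewrite mulrA.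
rewrite -big_distrl /=.
have -> : \sum_X gridw X * \prod_j gridpt X j ^+ cnt w j
    = \prod_j \sum_l vw j l * node j l ^+ cnt w j.
  rewrite bigA_distr_bigA; apply: eq_bigr => X _.
  by rewrite /gridw /gridpt -big_split.
rewrite inE; case: (boolP [forall j, cnt w j == beta j]) => [/forallP H|H].
  rewrite big1 ?mul1r; last by move=> j _; rewrite (eqP (H j)) vwP // eqxx.
  by apply: eq_bigr => j _; rewrite (eqP (H j)).
have [j lt] := ex_lt (cnt_sum w) H.
by rewrite (bigD1 j) //= vwP ?(ltnW lt) // (ltn_eqF lt) !mul0r.
Qed.
End Grid.

Lemma halve (V : zmodType) (G : seq V) :
  uniq G -> {in G, forall p, - p \in G} ->
  {in G, forall p, p != 0 -> p != - p} ->
  exists Rs : seq V, (size Rs <= (size G)./2)%N /\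
    {in G, forall p, p != 0 -> (p \in Rs) || (- p \in Rs)}.
Proof.
move: {2}(size G) (leqnn (size G)) => n; elim: n G => [|n IH] G.
  by rewrite leqn0 => /nilP -> _ _ _; exists [::]; split.
move=> sG uG cG nG.
case: (boolP (has (fun p => p != 0) G)) => [/hasP [p pG p0]|]; last first.
  move/hasPn => H; exists [::]; split => // q /H; by rewrite negbK => ->.
pose G' := [seq q <- G | (q != p) && (q != - p)].
have npG := cG p pG.
have pnp := nG p pG p0.
have sG' : (size G' + 2)%N = size G.
  rewrite size_filter -(count_predC (fun q => (q != p) && (q != - p)) G).
  congr (_ + _)%N.
  have Hc : count (predC (fun q => (q != p) && (q != - p))) G = 2%N.
    rewrite (eq_count (a2 := predU (pred1 p) (pred1 (- p)))); last first.
      by move=> q /=; rewrite negb_and !negbK.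
    have := count_predUI (pred1 p) (pred1 (- p)) G.
    rewrite (eq_count (a1 := predI _ _) (a2 := pred0)); last first.
      move=> q /=; case: (eqVneq q p) => [->|//]; by rewrite (negbTE pnp).
    rewrite count_pred0 addn0 => ->.
    by rewrite !count_uniq_mem // pG npG.
  by rewrite Hc.
have uG' : uniq G' by apply: filter_uniq.
have [Rs' [sR hR]] : exists Rs' : seq V, (size Rs' <= (size G')./2)%N /\
    {in G', forall q, q != 0 -> (q \in Rs') || (- q \in Rs')}.
  apply: IH => //.
  - by move: sG; rewrite -sG'; move: (size G') => a; lia.
  - move=> q; rewrite !mem_filter => /andP [/andP [qp qnp] qG].
    rewrite cG // andbT; apply/andP; split.
      by apply: contra qnp => /eqP <-; rewrite opprK.
    by apply: contra qp => /eqP /oppr_inj ->.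
  - by move=> q; rewrite mem_filter => /andP [_ qG]; exact: nG.
exists (p :: Rs'); split.
  rewrite /= -sG'; move: sR; move: (size Rs') (size G') => a b.
  rewrite -!divn2 => h; rewrite -addn1 (divnDr _ (dvdnn 2)) divnn /=.
  by rewrite leq_add2r.
move=> q qG q0; rewrite !inE.
case: (eqVneq q p) => //= qp; case: (eqVneq q (- p)) => [->|qnp]; first by rewrite opprK eqxx orbT.
have qG' : q \in G' by rewrite mem_filter qp qnp.
by have /orP [->|->] := hR q qG' q0; rewrite ?orbT.
Qed.

Definition dotf (R : pzRingType) M (q : {ffun 'I_M -> R}) (x : 'I_M -> R) :=
  \sum_j q j * x j.

Lemma dotfN (R : pzRingType) M (q : {ffun 'I_M -> R}) x : dotf (- q) x = - dotf q x.
Proof. by rewrite /dotf -sumrN; apply: eq_bigr => j _; rewrite ffunE mulNr. Qed.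

Lemma dotf0 (R : pzRingType) M x : dotf (0 : {ffun 'I_M -> R}) x = 0.
Proof. by rewrite /dotf big1 // => j _; rewrite ffunE mul0r. Qed.

Lemma evenN (R : pzRingType) (a : R) D : ~~ odd D -> (- a) ^+ D = a ^+ D.
Proof. by move=> oD; rewrite exprNn -signr_odd (negbTE oD) expr0 mul1r. Qed.

Lemma regroup (R : pzRingType) M D (T : eqType) (F : seq T) (c : T -> R)
  (pts : T -> {ffun 'I_M -> R}) (Rs : seq {ffun 'I_M -> R}) :
  ~~ odd D -> (0 < D)%N ->
  {in F, forall X, pts X != 0 -> (pts X \in Rs) || (- pts X \in Rs)} ->
  forall x, \sum_(X <- F) c X * dotf (pts X) x ^+ D =
  \sum_(i < size Rs) (\sum_(X <- F |
        find (fun r => (r == pts X) || (r == - pts X)) Rs == i) c X)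
     * dotf (nth 0 Rs i) x ^+ D.
Proof.
move=> oD D0 HR x.
under [RHS]eq_bigr do rewrite big_distrl /=.
rewrite (exchange_big_dep xpredT) //= big_seq_cond [RHS]big_seq_cond.
apply: eq_bigr => X /andP [XF _].
set P := (fun r => (r == pts X) || (r == - pts X)); set k := find P Rs.
case: (ltnP k (size Rs)) => ks.
  rewrite (big_pred1 (Ordinal ks)) /=; last by move=> i; rewrite /= eq_sym -(inj_eq val_inj).
  have : P (nth 0 Rs k) by apply: nth_find; rewrite -has_find in ks.
  by case/orP => /eqP ->; rewrite ?dotfN ?evenN.
rewrite big_pred0; last by move=> i; apply/negbTE; rewrite neq_ltn (leq_trans (ltn_ord i) ks) orbT.
case: (eqVneq (pts X) 0) => [->|p0]; first by rewrite dotf0 expr0n gtn_eqF // mulr0.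
have : has P Rs.
  have /orP [H|H] := HR X XF p0; apply/hasP.
    by exists (pts X) => //; rewrite /P eqxx.
  by exists (- pts X) => //; rewrite /P eqxx orbT.
by rewrite has_find ltnNge ks.
Qed.

Lemma card_le_ord n k : (k <= n)%N -> #|[pred l : 'I_n | (l < k)%N]| = k.
Proof.
move=> kn; rewrite -sum1_card.
rewrite (big_ord_narrow_cond (P := xpredT) (F := fun _ => 1%N) kn) /=.
by rewrite sum1_card card_ord.
Qed.

Lemma construct (R : numFieldType) M (beta : 'I_M -> nat) :
  ~~ odd (\sum_j beta j) -> (0 < \sum_j beta j)%N ->
  exists J (mu : 'I_J -> R) (q : 'I_J -> {ffun 'I_M -> R}),
    (J <= (\prod_j (beta j).+1)./2)%N /\
    forall x, \sum_i mu i * dotf (q i) x ^+ (\sum_j beta j) = \prod_j x j ^+ beta j.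
Proof.
set D := (\sum_j beta j)%N => oD D0.
pose wd : R := (words D beta)%:R.
have wd0 : wd != 0 by rewrite pnatr_eq0 -lt0n words_pos.
pose A := [pred X : {ffun 'I_M -> 'I_D.+1} | [forall j, (X j <= beta j)%N]].
pose F := enum A.
pose pts (X : {ffun 'I_M -> 'I_D.+1}) : {ffun 'I_M -> R} := [ffun j => @gridpt R M beta X j].
pose c (X : {ffun 'I_M -> 'I_D.+1}) := @gridw R M beta X / wd.
have ident x : \sum_(X <- F) c X * dotf (pts X) x ^+ D = \prod_j x j ^+ beta j.
  apply: (mulfI wd0); rewrite -grid_identity big_distrr /= big_enum /= big_mkcond /=.
  apply: eq_bigr => X _; rewrite /c /dotf.
  under [in LHS]eq_bigr do rewrite ffunE.
  case: ifP => XA.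
    by rewrite mulrA [wd * _]mulrC divfK.
  move/negbT: XA; rewrite inE => /forallPn [j]; rewrite -ltnNge => lt.
  by rewrite /gridw (bigD1 j) //= /vw leqNgt lt mul0r mul0r.
pose G := undup (map pts F).
have bD j : (beta j <= D)%N by apply: betaD.
have negG : {in G, forall p, - p \in G}.
  move=> p; rewrite mem_undup => /mapP [X XF ->].
  pose X' : {ffun 'I_M -> 'I_D.+1} := [ffun j => inord (beta j - X j)].
  have XA : X \in A by rewrite -mem_enum.
  have XA' : forall j, (X j <= beta j)%N by move: XA; rewrite inE => /forallP.
  rewrite mem_undup; apply/mapP; exists X'.
    by rewrite mem_enum inE; apply/forallP => j; rewrite ffunE inordK ?leq_subr // ltnS (leq_trans (leq_subr _ _)).
  apply/ffunP => j; rewrite !ffunE /gridpt /node ffunE inordK; last first.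
    by rewrite ltnS (leq_trans (leq_subr _ _)).
  rewrite natrB ?XA' //; ring.
have nontriv : {in G, forall p, p != 0 -> p != - p}.
  move=> p _; apply: contra => /eqP pE; apply/eqP/ffunP => j.
  have := congr1 (fun f : {ffun 'I_M -> R} => f j) pE; rewrite /= ffunE => /eqP.
  by rewrite ffunE -addr_eq0 -mulr2n mulrn_eq0 /= => /eqP.
have [Rs [sR HR]] := halve (undup_uniq _) negG nontriv.
have HF : {in F, forall X, pts X != 0 -> (pts X \in Rs) || (- pts X \in Rs)}.
  by move=> X XF; apply: HR; rewrite mem_undup; apply: map_f.
exists (size Rs).
exists (fun i : 'I_(size Rs) => \sum_(X <- F | find (fun r => (r == pts X) || (r == - pts X)) Rs == i) c X).
exists (fun i : 'I_(size Rs) => nth 0 Rs i); split; last first.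
  by move=> x; rewrite -ident (regroup c oD D0 HF).
apply: (leq_trans sR); apply: half_leq.
rewrite (leq_trans (size_undup _)) // size_map /F -cardE.
pose Q (j : 'I_M) := [pred l : 'I_D.+1 | (l < (beta j).+1)%N].
rewrite (eq_card (B := family Q)); last first.
  move=> X; apply/idP/idP => [XA|/familyP XQ].
    by apply/familyP => j; rewrite inE ltnS; move: XA; rewrite inE => /forallP; apply.
  by rewrite inE; apply/forallP => j; have := XQ j; rewrite inE ltnS.
rewrite card_family foldrE big_map big_enum /=.
by rewrite leq_eqVlt; apply/orP; left; apply/eqP; apply: eq_bigr => j _; rewrite card_le_ord // ltnS.
Qed.

Definition ext (T : Type) r (x : T) (a : 'I_r -> T) (i : 'I_r.+1) : T :=
  if unlift ord0 i is Some j then a j else x.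

Lemma sum_ext (V : zmodType) T r (x : T) (a : 'I_r -> T) (F : T -> V) :
  \sum_(i < r.+1) F (ext x a i) = F x + \sum_(i < r) F (a i).
Proof. by rewrite big_ord_recl /ext unlift_none; congr (_ + _); apply: eq_bigr => i _; rewrite liftK. Qed.

Lemma sum_ext3 (R : realType) n s r x (u : 'I_n -> R) k (c : 'I_r -> R) uh kh th :
  \sum_(i < r.+1) ext x c i * atom s (ext u uh i) (ext k kh i) th
  = x * atom s u k th + \sum_i c i * atom s (uh i) (kh i) th.
Proof.
by rewrite big_ord_recl /ext unlift_none; congr (_ + _); apply: eq_bigr => i _; rewrite liftK.
Qed.

Lemma signed_DC (R : realType) n s (f : ('I_n -> R) -> R) J (mu : 'I_J -> R)
  (U : 'I_J -> 'I_n -> R) (ka : 'I_J -> R) :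
  (forall th, f th = \sum_i mu i * atom s (U i) (ka i) th) ->
  exists k, (k <= J)%N /\ DC_atoms s f k.
Proof.
elim: J mu U ka f => [|J IH] mu U ka f Hf.
  exists 0%N; split => //.
  exists 0%N, 0%N, (fun i => 0), (fun i => fun _ => 0), (fun i => 0).
  exists (fun i => 0), (fun i => fun _ => 0), (fun i => 0); split => //; try by case.
  by move=> th; rewrite Hf !big_ord0 subr0.
pose f' th := \sum_(i < J) mu (lift ord0 i) * atom s (U (lift ord0 i)) (ka (lift ord0 i)) th.
have [k [kJ [r [q [a [ug [kg [c [uh [kh [rq apos cpos id']]]]]]]]]]] :=
  IH (fun i => mu (lift ord0 i)) (fun i => U (lift ord0 i)) (fun i => ka (lift ord0 i)) f' (fun th => erefl).
have Hf2 th : f th = mu ord0 * atom s (U ord0) (ka ord0) th + f' th.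
  by rewrite Hf big_ord_recl.
case: (ltgtP (mu ord0) 0) => m0.
- exists k.+1; split => //.
  exists r, q.+1, a, ug, kg, (ext (- mu ord0) c), (ext (U ord0) uh), (ext (ka ord0) kh).
  split.
  + by rewrite addnS rq.
  + exact: apos.
  + by move=> i; rewrite /ext; case: (unlift ord0 i) => [j|]; [exact: cpos | rewrite oppr_gt0].
  + move=> th; rewrite Hf2 id'.
    rewrite sum_ext3; ring.
- exists k.+1; split => //.
  exists r.+1, q, (ext (mu ord0) a), (ext (U ord0) ug), (ext (ka ord0) kg), c, uh, kh.
  split.
  + by rewrite addSn rq.
  + by move=> i; rewrite /ext; case: (unlift ord0 i) => [j|]; [exact: apos | ].
  + exact: cpos.
  + move=> th; rewrite Hf2 id' sum_ext3; ring.
- exists k; split; first exact: leqW.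
  exists r, q, a, ug, kg, c, uh, kh; split => // th.
  by rewrite Hf2 m0 mul0r add0r id'.
Qed.

Lemma min_exists (P : nat -> Prop) : (exists k, P k) ->
  exists N, P N /\ forall k, P k -> (N <= k)%N.
Proof.
case=> k; elim: k {-2}k (leqnn k) => [|n IH] k kn Pk.
  by move: kn; rewrite leqn0 => /eqP E; subst k; exists 0%N.
case: (classic (exists j, (j < k)%N /\ P j)) => [[j [jk Pj]]|H].
  by apply: (IH j) => //; move: jk kn; lia.
exists k; split => // j Pj; rewrite leqNgt; apply/negP => jk.
by apply: H; exists j.
Qed.

Lemma split_l m n (i : 'I_m) : split (lshift n i) = inl i.
Proof. exact: (@unsplitK m n (inl i)). Qed.
Lemma split_r m n (i : 'I_n) : split (rshift m i) = inr i.
Proof. exact: (@unsplitK m n (inr i)). Qed.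

Lemma DC_unfold (R : realType) n s (f : ('I_n -> R) -> R) k : DC_atoms s f k ->
  exists (lam : 'I_k -> R) (U : 'I_k -> 'I_n -> R) (ka : 'I_k -> R),
    forall th, f th = \sum_i lam i * atom s (U i) (ka i) th.
Proof.
case=> [r [q [a [ug [kg [c [uh [kh [<- _ _ H]]]]]]]]].
exists (fun i => match split i with inl i' => a i' | inr i' => - c i' end).
exists (fun i => match split i with inl i' => ug i' | inr i' => uh i' end).
exists (fun i => match split i with inl i' => kg i' | inr i' => kh i' end).
move=> th; rewrite H big_split_ord /=.
rewrite [X in _ = X + _](eq_bigr (fun i => a i * atom s (ug i) (kg i) th)); last first.
  by move=> i _; rewrite split_l.
rewrite [X in _ = _ + X](eq_bigr (fun i => - (c i * atom s (uh i) (kh i) th))); last first.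
  by move=> i _; rewrite split_r mulNr.
by rewrite sumrN.
Qed.

Lemma lower_from_ident (R : numFieldType) m K (lam : 'I_K -> R)
  (p : 'I_K -> 'I_m.+1 -> R) (beta : 'I_m.+1 -> nat) :
  (1 <= beta ord0)%N ->
  (forall x : 'I_m.+1 -> R, (forall j, x j != 0) ->
     \sum_k lam k * (\sum_j p k j * x j) ^+ (\sum_j beta j) = \prod_j x j ^+ beta j) ->
  (\prod_(i < m) (beta (lift ord0 i)).+1 <= K)%N.
Proof.
move=> b0 ident.
have mom := moments (erefl (\sum_j beta j)%N) ident.
apply: (lower_bound (lam := lam) (p := p)) => //.
  move=> g sg ng.
  have gD j : (g j <= \sum_j beta j)%N by rewrite -sg (bigD1 j) //= leq_addr.
  have := mom g gD; rewrite (negbTE ng) => /eqP.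
  rewrite mulf_eq0 pnatr_eq0 eqn0Ngt words_pos //= => /eqP //.
have bD j : (beta j <= \sum_j beta j)%N by rewrite (bigD1 j) //= leq_addr.
have := mom beta bD.
have -> : [forall j, beta j == beta j] by apply/forallP => j.
by move=> E; apply/eqP => E2; move: E; rewrite E2 mulr0 => /eqP; rewrite eq_sym oner_eq0.
Qed.

Lemma aux1 (R : fieldType) (a y t : R) : t != 0 -> a * y = t * (a * (y / t)).
Proof. by move=> t0; field. Qed.

Lemma aux2 (R : fieldType) (t P : R) s : t ^+ s != 0 -> t ^+ s.+1 * (P * t^-1 ^+ s) = t ^+ 1 * P.
Proof. by move=> ts; rewrite exprVn exprS expr1; field. Qed.

Lemma prod_cond_lift (n : nat) (F : 'I_n.+1 -> nat) :
  (\prod_(i < n.+1 | (0 < i)%N) F i = \prod_(i < n) F (lift ord0 i))%N.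
Proof. by rewrite big_mkcond big_ord_recl /= mul1n. Qed.


End Aux.
Import Aux.

Theorem theorem3p2 (R : realType) (n : nat) (b : 'I_n -> nat) :
  (1 <= n)%N ->
  (forall i, 1 <= b i)%N ->
  (forall i j : 'I_n, (i <= j)%N -> (b i <= b j)%N) ->
  let s := (\sum_(i < n) b i)%N in
  let f := fun th : 'I_n -> R => \prod_(i < n) th i ^+ b i in
  (~~ odd s ->
     exists N : nat, min_atom_count s f N /\
       (\prod_(i < n | (0 < i)%N) (b i).+1 <= N)%N /\
       (N <= (\prod_(i < n) (b i).+1)./2)%N) /\
  (odd s -> min_atom_count s f (\prod_(i < n) (b i).+1)%N).
Proof.
case: n b => [//|n] b _ b1 _ s f; split => [os|os].
-
  have s0 : (0 < s)%N by rewrite /s big_ord_recl (leq_trans (b1 ord0)) ?leq_addr.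
  have [J [mu [q [JB Hq]]]] := @construct R _ b os s0.
  have [k [kJ DCk]] : exists k, (k <= J)%N /\ DC_atoms s f k.
    apply: (signed_DC (mu := mu) (U := fun i j => q i j) (ka := fun _ => 0)).
    by move=> th; rewrite /f -Hq; apply: eq_bigr => i _; rewrite /atom os.
  have [N [DCN minN]] := min_exists (ex_intro _ k DCk).
  exists N; split; first by split.
  split; last by apply: (leq_trans (minN k DCk)); apply: (leq_trans kJ).
  have [lam [U [ka HU]]] := DC_unfold DCN.
  rewrite prod_cond_lift; apply: (lower_from_ident (lam := lam) (p := U)) => //.
  by move=> x _; rewrite -/s -/(f x) HU; apply: eq_bigr => i _; rewrite /atom os.
-
  pose b1f (j : 'I_n.+2) : nat := if unlift ord0 j is Some j' then b j' else 1%N.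
  have sb1 : (\sum_j b1f j = s.+1)%N.
    rewrite big_ord_recl /b1f unlift_none add1n; congr (_.+1).
    by apply: eq_bigr => i _; rewrite liftK.
  have pb1 : (\prod_j (b1f j).+1 = 2 * \prod_i (b i).+1)%N.
    rewrite big_ord_recl /b1f unlift_none; congr (_ * _)%N.
    by apply: eq_bigr => i _; rewrite liftK.
  have ob1 : ~~ odd (\sum_j b1f j) by rewrite sb1 /= os.
  have sb0 : (0 < \sum_j b1f j)%N by rewrite sb1.
  have [J [mu [q [JB Hq]]]] := @construct R _ b1f ob1 sb0.
  rewrite pb1 mul2n doubleK in JB.
  have [k [kJ DCk]] : exists k, (k <= J)%N /\ DC_atoms s f k.
    apply: (signed_DC (mu := mu) (U := fun i j => q i (lift ord0 j)) (ka := fun i => q i ord0)).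
    move=> th; have := Hq (ext 1 th).
    rewrite sb1 big_ord_recl /b1f /ext unlift_none expr1n mul1r.
    under [X in _ = X -> _]eq_bigr do rewrite liftK.
    move=> E; rewrite /f -E; apply: eq_bigr => i _; rewrite /atom os /dotf /dotp /=.
    congr (_ * _ ^+ _); rewrite big_ord_recl unlift_none mulr1 addrC; congr (_ + _).
    by apply: eq_bigr => j _; rewrite liftK.
  have hb1 : (1 <= b1f ord0)%N by rewrite /b1f unlift_none.
  have lowb k' : DC_atoms s f k' -> (\prod_i (b i).+1 <= k')%N.
    move=> /DC_unfold [lam [U [ka HU]]].
    have -> : (\prod_i (b i).+1 = \prod_i (b1f (lift ord0 i)).+1)%N.
      by apply: eq_bigr => i _; rewrite /b1f liftK.
    apply: (lower_from_ident (lam := lam) (p := fun k => ext (ka k) (U k)) (beta := b1f) hb1).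
    move=> x xnz; set t := x ord0; have t0 : t != 0 := xnz ord0.
    pose th := fun j : 'I_n.+1 => x (lift ord0 j) / t.
    have E1 k0 : \sum_j ext (ka k0) (U k0) j * x j = t * (dotp (U k0) th + ka k0).
      rewrite big_ord_recl /ext unlift_none.
      under eq_bigr do rewrite liftK.
      rewrite mulrDr /dotp mulr_sumr addrC [t * ka k0]mulrC; congr (_ + _).
      by apply: eq_bigr => j _; rewrite /th (aux1 _ _ t0).
    transitivity (\sum_k0 t ^+ s.+1 * (lam k0 * atom s (U k0) (ka k0) th)).
      by apply: eq_bigr => k0 _; rewrite E1 sb1 exprMn /atom os mulrCA.
    rewrite -big_distrr /= -HU /f [in RHS]big_ord_recl /b1f unlift_none -/t.
    under [in RHS]eq_bigr do rewrite liftK.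
    rewrite /th (eq_bigr (fun i => x (lift ord0 i) ^+ b i * t^-1 ^+ b i)); last first.
      by move=> i _; rewrite exprMn.
    rewrite big_split /= prodrXr -/s.
    by apply: aux2; apply: expf_neq0.
  have kE : k = (\prod_i (b i).+1)%N.
    by apply/eqP; rewrite eqn_leq (leq_trans kJ JB) lowb.
  split; first by rewrite -kE.
  exact: lowb.
Qed.
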